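(* Let $\phi_1,\dots,\phi_n:\mathbb{R}^d\to\mathbb{R}$ be differentiable and let $P(w)=\frac1n\sum_{i=1}^n\phi_i(w)$. Suppose $P$ is $H$-strongly convex with $H>0$ and $(1/\gamma)$-smooth, and let $w^*$ be a minimizer of $P$. Run the stratified-sampling minibatch SGD algorithm described in the context with constant step size $\eta_t=\eta\in\big(0,\frac{2}{H+1/\gamma}\big]$. Let $\alpha(\eta)=1-\frac{2\eta H/\gamma}{H+1/\gamma}$. Then $\alpha(\eta)\in\big[\big(\frac{H-1/\gamma}{H+1/\gamma}\big)^2,1\big)$, and for every $T\ge1$, $$\mathbb{E}P(w_{T+1})-P(w^* )\le\frac{\alpha(\eta)^T}{2\gamma}\|w^*\|^2+\frac{\eta^2}{2\gamma}\sum_{t=1}^T\alpha(\eta)^{T-t}\,\mathbb{E}V_t,$$ where $V_t$ is the variance of the stochastic gradient $g_t$ defined in the context.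
   Context: $\|\cdot\|$ denotes the Euclidean norm. A differentiable $\phi:\mathbb{R}^d\to\mathbb{R}$ is $H$-strongly convex ($H\ge0$) if $\phi(u)\ge\phi(v)+\nabla\phi(v)^\top(u-v)+\frac H2\|u-v\|^2$ for all $u,v$, and $(1/\gamma)$-smooth ($\gamma>0$) if $\phi(u)\le\phi(v)+\nabla\phi(v)^\top(u-v)+\frac1{2\gamma}\|u-v\|^2$ for all $u,v$. Algorithm (SGD with stratified sampling): start with $w_1=0$. At each step $t=1,2,\dots$, a partition of $[n]=\{1,\dots,n\}$ into nonempty disjoint sets $C_1^t,\dots,C_k^t$ with $|C_i^t|=n_i^t$, and positive integers $b_1^t,\dots,b_k^t$, are chosen (possibly depending on the past, but before the step-$t$ sampling). Then, independently across $i$ and of the past given these choices, for each $i$ a multiset $B_i^t$ of $b_i^t$ indices is drawn i.i.d. uniformly (with replacement) from $C_i^t$. Set $g_t=\frac1n\sum_{i=1}^k\frac{n_i^t}{b_i^t}\sum_{s\in B_i^t}\nabla\phi_s(w_t)$ and $w_{t+1}=w_t-\eta_t g_t$. The variance is $V_t=\mathbb{E}\big[\|g_t-\nabla P(w_t)\|^2\,\big|\,\text{past}\big]$ (note $\mathbb{E}[g_t\mid\text{past}]=\nabla P(w_t)$). *)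

(* Defs.v *)
From HB Require Import structures.
From mathcomp Require Import all_boot all_order all_algebra.
From mathcomp Require Import all_classical all_reals all_analysis.
Set Implicit Arguments. Unset Strict Implicit. Unset Printing Implicit Defensive.
Import Order.TTheory GRing.Theory Num.Theory.
Import numFieldNormedType.Exports.
Local Open Scope ring_scope.

Section Defs.
Variables (R : realType) (d n : nat).

Definition dotv (u v : 'rV[R]_d) : R := \sum_(j < d) u 0 j * v 0 j.
Definition sqnorm (u : 'rV[R]_d) : R := dotv u u.

Definition has_gradient (f : 'rV[R]_d -> R) (gf : 'rV[R]_d -> 'rV[R]_d) :=
  forall w, differentiable f w /\ forall h, 'd f w h = dotv (gf w) h.

Definition Pobj (phi : 'I_n -> 'rV[R]_d -> R) (w : 'rV[R]_d) : R :=
  n%:R^-1 * \sum_(i < n) phi i w.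
Definition gradP (gphi : 'I_n -> 'rV[R]_d -> 'rV[R]_d) (w : 'rV[R]_d) : 'rV[R]_d :=
  n%:R^-1 *: \sum_(i < n) gphi i w.

Definition strongly_convex (H : R) (f : 'rV[R]_d -> R) (gf : 'rV[R]_d -> 'rV[R]_d) :=
  forall u v, f v + dotv (gf v) (u - v) + H / 2 * sqnorm (u - v) <= f u.
Definition smooth (gam : R) (f : 'rV[R]_d -> R) (gf : 'rV[R]_d -> 'rV[R]_d) :=
  forall u v, f u <= f v + dotv (gf v) (u - v) + 1 / (2 * gam) * sqnorm (u - v).

(* A choice at step t: the list of pairs (C_i^t, b_i^t), i = 1..k. *)
Definition choice_t := seq (finset.set_type 'I_n * nat).
(* Realized sample at step t: for each block i, the sequence B_i^t of drawn indices. *)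
Definition sample_t := seq (seq 'I_n).

Definition valid_choice (ch : choice_t) : bool :=
  all (fun p : finset.set_type 'I_n * nat => (0 < #|p.1|)%N && (0 < p.2)%N) ch &&
  [forall x : 'I_n, count (fun p : finset.set_type 'I_n * nat => x \in p.1) ch == 1%N].

Definition stoch_grad (gphi : 'I_n -> 'rV[R]_d -> 'rV[R]_d) (ch : choice_t)
  (smp : sample_t) (w : 'rV[R]_d) : 'rV[R]_d :=
  n%:R^-1 *: \sum_(pq <- zip ch smp)
     ((#|pq.1.1|%:R / (pq.1.2)%:R) *: \sum_(s <- pq.2) gphi s w).

Definition strategy := seq sample_t -> choice_t.

(* Iterates: traj h = w_{t} where h is the history of the first t-1 samples;
   w_1 = 0, w_{t+1} = w_t - eta g_t. *)
Fixpoint traj_aux (gphi : 'I_n -> 'rV[R]_d -> 'rV[R]_d) (strat : strategy) (eta : R)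
  (pre rest : seq sample_t) (w : 'rV[R]_d) : 'rV[R]_d :=
  match rest with
  | [::] => w
  | s :: rest' => traj_aux gphi strat eta (rcons pre s) rest'
                    (w - eta *: stoch_grad gphi (strat pre) s w)
  end.
Definition traj gphi strat eta (h : seq sample_t) := traj_aux gphi strat eta [::] h 0.

(* Expectation over b i.i.d. uniform draws from C. *)
Fixpoint avg_tuple (C : finset.set_type 'I_n) (b : nat) (G : seq 'I_n -> R) : R :=
  match b with
  | 0 => G [::]
  | b'.+1 => #|C|%:R^-1 * \sum_(s in C) avg_tuple C b' (fun r => G (s :: r))
  end.
(* Expectation over the step sample, independent across blocks. *)
Fixpoint avg_sample (ch : choice_t) (G : sample_t -> R) : R :=
  match ch with
  | [::] => G [::]
  | p :: ch' => avg_tuple p.1 p.2 (fun r => avg_sample ch' (fun rs => G (r :: rs)))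
  end.
(* Expectation of F(history after m more steps), starting from history h. *)
Fixpoint Ehist (strat : strategy) (m : nat) (F : seq sample_t -> R) (h : seq sample_t) : R :=
  match m with
  | 0 => F h
  | m'.+1 => avg_sample (strat h) (fun s => Ehist strat m' F (rcons h s))
  end.

(* V_t as a function of the past h (of length t-1) *)
Definition Vcond gphi strat eta (h : seq sample_t) : R :=
  let w := traj gphi strat eta h in
  avg_sample (strat h) (fun s => sqnorm (stoch_grad gphi (strat h) s w - gradP gphi w)).

(* E P(w_{T+1}) *)
Definition EP phi gphi strat eta (T : nat) : R :=
  Ehist strat T (fun h => Pobj phi (traj gphi strat eta h)) [::].
(* E V_t, t >= 1 *)
Definition EV gphi strat eta (t : nat) : R :=
  Ehist strat t.-1 (Vcond gphi strat eta) [::].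

End Defs.

(* Main.v *)
Require Import Defs.
From HB Require Import structures.
From mathcomp Require Import all_boot all_order all_algebra.
From mathcomp Require Import all_classical all_reals all_analysis.
From mathcomp Require Import ring lra.
Import Order.TTheory GRing.Theory Num.Theory.
Import numFieldNormedType.Exports.
Local Open Scope ring_scope.
Set Implicit Arguments. Unset Strict Implicit. Unset Printing Implicit Defensive.

Section Vec.
Variables (R : realType) (d : nat).
Implicit Types (u v w : 'rV[R]_d).

Lemma dotvC u v : dotv u v = dotv v u.
Proof. by apply: eq_bigr => j _; rewrite mulrC. Qed.

Lemma dotvDl u w v : dotv (u + w) v = dotv u v + dotv w v.
Proof. by rewrite /dotv -big_split; apply: eq_bigr => j _; rewrite mxE mulrDl. Qed.

Lemma dotvZl a u v : dotv (a *: u) v = a * dotv u v.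
Proof. by rewrite /dotv mulr_sumr; apply: eq_bigr => j _; rewrite mxE mulrA. Qed.

Lemma dotvNl u v : dotv (- u) v = - dotv u v.
Proof. by rewrite -scaleN1r dotvZl mulN1r. Qed.

Lemma dotvBl u w v : dotv (u - w) v = dotv u v - dotv w v.
Proof. by rewrite dotvDl dotvNl. Qed.

Lemma dotv0l v : dotv 0 v = 0.
Proof. by rewrite /dotv big1 // => j _; rewrite mxE mul0r. Qed.

Lemma dotvDr u w v : dotv v (u + w) = dotv v u + dotv v w.
Proof. by rewrite dotvC dotvDl !(dotvC v). Qed.
Lemma dotvZr a u v : dotv v (a *: u) = a * dotv v u.
Proof. by rewrite dotvC dotvZl dotvC. Qed.
Lemma dotvNr u v : dotv v (- u) = - dotv v u.
Proof. by rewrite dotvC dotvNl dotvC. Qed.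
Lemma dotvBr u w v : dotv v (u - w) = dotv v u - dotv v w.
Proof. by rewrite dotvDr dotvNr. Qed.

Lemma dotv_suml (I : Type) (r : seq I) (P : pred I) (F : I -> 'rV[R]_d) v :
  dotv (\sum_(i <- r | P i) F i) v = \sum_(i <- r | P i) dotv (F i) v.
Proof. by apply: (big_morph (fun u => dotv u v)) => [x y|]; rewrite ?dotvDl ?dotv0l. Qed.

Lemma sqnorm_ge0 u : 0 <= sqnorm u.
Proof. by apply: sumr_ge0 => j _; rewrite -expr2 sqr_ge0. Qed.

Lemma sqnorm_eq0 u : sqnorm u = 0 -> u = 0.
Proof.
move=> h; apply/matrixP => i j; rewrite mxE (ord1 i).
have hp : forall k : 'I_d, true -> 0 <= u 0 k * u 0 k by move=> k _; rewrite -expr2 sqr_ge0.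
have := psumr_eq0P hp h (i:=j) isT.
by move/eqP; rewrite mulf_eq0 orbb => /eqP.
Qed.

Lemma sqnormB u v : sqnorm (u - v) = sqnorm u - 2 * dotv u v + sqnorm v.
Proof. rewrite /sqnorm dotvBl !dotvBr (dotvC v u); ring. Qed.

Lemma sqnormN u : sqnorm (- u) = sqnorm u.
Proof. by rewrite /sqnorm dotvNl dotvNr opprK. Qed.

Lemma sqnormZ a u : sqnorm (a *: u) = a ^+ 2 * sqnorm u.
Proof. rewrite /sqnorm dotvZl dotvZr; ring. Qed.

Lemma sqnormBZ u a v : sqnorm (u - a *: v) = sqnorm u - 2 * a * dotv v u + a ^+ 2 * sqnorm v.
Proof. rewrite sqnormB sqnormZ dotvZr (dotvC u v); ring. Qed.

End Vec.

Section Opt.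
Variables (R : realType) (d : nat).
Local Notation V := 'rV[R]_d.

Lemma half_ineq (g : V -> R) (gg : V -> V) M
  (conv : forall u v, g v + dotv (gg v) (u - v) <= g u)
  (sm : forall u v, g u <= g v + dotv (gg v) (u - v) + M / 2 * sqnorm (u - v)) x y s :
  (s - M * s ^+ 2 / 2) * sqnorm (gg y - gg x) <= g y - g x - dotv (gg x) (y - x).
Proof.
set D := gg y - gg x.
have h1 := conv (y - s *: D) x.
have h2 := sm (y - s *: D) y.
have e1 : y - s *: D - x = (y - x) - s *: D by rewrite addrAC.
have e2 : y - s *: D - y = - (s *: D) by rewrite addrAC subrr add0r.
rewrite e1 e2 sqnormN sqnormZ dotvBr dotvNr !dotvZr in h1 h2.
have e3 : sqnorm D = dotv (gg y) D - dotv (gg x) D by rewrite /sqnorm {1}/D dotvBl.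
rewrite e3; nra.
Qed.

Lemma coco_s (g : V -> R) (gg : V -> V) M
  (conv : forall u v, g v + dotv (gg v) (u - v) <= g u)
  (sm : forall u v, g u <= g v + dotv (gg v) (u - v) + M / 2 * sqnorm (u - v)) x y s :
  (2 * s - M * s ^+ 2) * sqnorm (gg y - gg x) <= dotv (gg y - gg x) (y - x).
Proof.
have h1 := half_ineq conv sm x y s.
have h2 := half_ineq conv sm y x s.
have e : sqnorm (gg x - gg y) = sqnorm (gg y - gg x) by rewrite -opprB sqnormN.
rewrite e in h2.
rewrite !dotvBl !dotvBr in h1 h2 *.
lra.
Qed.

Lemma coco_M (g : V -> R) (gg : V -> V) M
  (conv : forall u v, g v + dotv (gg v) (u - v) <= g u)
  (sm : forall u v, g u <= g v + dotv (gg v) (u - v) + M / 2 * sqnorm (u - v)) x y :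
  sqnorm (gg y - gg x) <= M * dotv (gg y - gg x) (y - x).
Proof.
set D := gg y - gg x.
have hs := coco_s conv sm x y.
have hD0 := sqnorm_ge0 D.
case: (ltrP 0 M) => hM.
  have := hs M^-1.
  have -> : 2 * M^-1 - M * M^-1 ^+ 2 = M^-1 by field; exact: lt0r_neq0.
  move=> h; have := ler_wpM2l (ltW hM) h; by rewrite mulrA mulfV ?mul1r // lt0r_neq0.
have hDz : 0 <= dotv D (y - x) by have := hs 0; rewrite mulr0 expr0n /= mulr0 subr0 mul0r.
have hD : sqnorm D = 0.
  apply/eqP; rewrite eq_le hD0 andbT leNgt; apply/negP => hp.
  set c := dotv D (y - x).
  have := hs ((c + 1) / (2 * sqnorm D)).
  set s := (c + 1) / (2 * sqnorm D).
  have hs0 : 0 <= s by rewrite /s divr_ge0 // ?addr_ge0 // mulr_ge0.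
  have hsD : 2 * s * sqnorm D = c + 1 by rewrite /s; field; rewrite lt0r_neq0.
  have hm : 0 <= - M * (s ^+ 2 * sqnorm D).
    by apply: mulr_ge0; [rewrite oppr_ge0 | apply: mulr_ge0; rewrite ?sqr_ge0 ?ltW].
  move=> h; rewrite -/D -/c in h; lra.
by rewrite -/D hD (sqnorm_eq0 hD) dotv0l mulr0.
Qed.

End Opt.

Section OptP.
Variables (R : realType) (d : nat).
Local Notation V := 'rV[R]_d.
Variables (f : V -> R) (gf : V -> V) (H gam : R).
Hypothesis hgam : 0 < gam.
Hypothesis sc : forall u v, f v + dotv (gf v) (u - v) + H / 2 * sqnorm (u - v) <= f u.
Hypothesis sm : forall u v, f u <= f v + dotv (gf v) (u - v) + 1 / (2 * gam) * sqnorm (u - v).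

Lemma cocoP x y :
  H * gam^-1 * sqnorm (y - x) + sqnorm (gf y - gf x) <=
  (H + gam^-1) * dotv (gf y - gf x) (y - x).
Proof.
pose g u := f u - H / 2 * sqnorm u.
pose gg u := gf u - H *: u.
have conv : forall u v, g v + dotv (gg v) (u - v) <= g u.
  move=> u v; have := sc u v; rewrite /g /gg sqnormB dotvBl dotvZl !dotvBr (dotvC v u).
  rewrite /sqnorm; lra.
have smg : forall u v, g u <= g v + dotv (gg v) (u - v) + (gam^-1 - H) / 2 * sqnorm (u - v).
  move=> u v; have := sm u v; rewrite /g /gg !sqnormB dotvBl dotvZl !dotvBr (dotvC v u).
  have -> : 1 / (2 * gam) = gam^-1 / 2 by field; exact: lt0r_neq0.
  rewrite /sqnorm; lra.
have := coco_M conv smg x y.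
have -> : gg y - gg x = (gf y - gf x) - H *: (y - x).
  by apply/matrixP => i j; rewrite /gg !mxE; ring.
rewrite sqnormBZ (dotvBl (gf y - gf x)) dotvZl (dotvC (y - x)) /sqnorm.
lra.
Qed.

Lemma grad_min ws (hmin : forall w, f ws <= f w) : gf ws = 0.
Proof.
apply: sqnorm_eq0; set p := gf ws.
have h1 := sm (ws - gam *: p) ws.
have h2 := hmin (ws - gam *: p).
have e : ws - gam *: p - ws = - (gam *: p) by apply/matrixP => i j; rewrite !mxE; ring.
rewrite e sqnormN sqnormZ dotvNr dotvZr in h1.
have h3 : 1 / (2 * gam) * (gam ^+ 2 * sqnorm p) = gam / 2 * sqnorm p by field; exact: lt0r_neq0.
rewrite h3 in h1.
have hp := sqnorm_ge0 p.
have : gam * sqnorm p <= 0 by rewrite /sqnorm in h1 hp *; lra.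
rewrite pmulr_rle0 // => hle; apply/eqP; by rewrite eq_le hle hp.
Qed.

End OptP.

Section Prob.
Variables (R : realType) (n : nat).
Implicit Types (C : {set 'I_n}) (b : nat) (F G : seq 'I_n -> R).

Lemma avg_tupleD C b F G :
  avg_tuple C b (fun r => F r + G r) = avg_tuple C b F + avg_tuple C b G.
Proof.
elim: b F G => [|b IH] F G //=.
rewrite -mulrDr -big_split; congr (_ * _); apply: eq_bigr => s _.
exact: (IH (fun r => F (s :: r)) (fun r => G (s :: r))).
Qed.

Lemma avg_tupleZ C b c F :
  avg_tuple C b (fun r => c * F r) = c * avg_tuple C b F.
Proof.
elim: b F => [|b IH] F //=.
rewrite [RHS]mulrCA [in RHS]mulr_sumr; congr (_ * _); apply: eq_bigr => s _.
exact: (IH (fun r => F (s :: r))).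
Qed.

Lemma avg_tuple_cst C b (c : R) : (0 < #|C|)%N -> avg_tuple C b (fun _ => c) = c.
Proof.
move=> hC; elim: b => [|b IH] //=.
rewrite (eq_bigr (fun _ => c)) ?sumr_const; last by move=> s _; exact: IH.
by rewrite -[c *+ _]mulr_natr mulrCA mulVf ?mulr1 // pnatr_eq0 -lt0n.
Qed.

Lemma avg_tuple_le C b F G :
  (forall r, F r <= G r) -> avg_tuple C b F <= avg_tuple C b G.
Proof.
elim: b F G => [|b IH] F G hFG //=.
apply: ler_wpM2l; first by rewrite invr_ge0 ler0n.
apply: ler_sum => s _; exact: IH.
Qed.

Lemma avg_tuple_sum C b (a : 'I_n -> R) : (0 < #|C|)%N ->
  avg_tuple C b (fun r => \sum_(s <- r) a s) = b%:R * (#|C|%:R^-1 * \sum_(s in C) a s).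
Proof.
move=> hC; elim: b => [|b IH] /=; first by rewrite big_nil mul0r.
have e : forall s, avg_tuple C b (fun r => \sum_(s0 <- s :: r) a s0)
   = a s + b%:R * (#|C|%:R^-1 * \sum_(s in C) a s).
  move=> s; rewrite (_ : (fun r => \sum_(s0 <- s :: r) a s0) = (fun r => a s + \sum_(s0 <- r) a s0)).
    by rewrite avg_tupleD avg_tuple_cst // IH.
  by apply/funext => r; rewrite big_cons.
rewrite (eq_bigr _ (fun s _ => e s)) big_split /= sumr_const -[_ *+ #|C|]mulr_natr.
have hC0 : (#|C|%:R : R) != 0 by rewrite pnatr_eq0 -lt0n.
by rewrite -addn1 natrD; field.
Qed.

Definition nonempty (ch : choice_t n) := all (fun p : {set 'I_n} * nat => (0 < #|p.1|)%N) ch.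

Lemma avg_sampleD ch (F G : sample_t n -> R) :
  avg_sample ch (fun s => F s + G s) = avg_sample ch F + avg_sample ch G.
Proof.
elim: ch F G => [|p ch IH] F G //=.
rewrite -avg_tupleD; congr avg_tuple; apply/funext => r.
exact: (IH (fun rs => F (r :: rs)) (fun rs => G (r :: rs))).
Qed.

Lemma avg_sampleZ ch c (F : sample_t n -> R) :
  avg_sample ch (fun s => c * F s) = c * avg_sample ch F.
Proof.
elim: ch F => [|p ch IH] F //=.
rewrite -avg_tupleZ; congr avg_tuple; apply/funext => r.
exact: (IH (fun rs => F (r :: rs))).
Qed.

Lemma avg_sample_cst ch (c : R) : nonempty ch -> avg_sample ch (fun _ => c) = c.
Proof.
elim: ch => [|p ch IH] //= /andP[hp hch].
rewrite (_ : (fun r => avg_sample ch (fun _ => c)) = fun _ => c).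
  exact: avg_tuple_cst.
by apply/funext => r; exact: IH.
Qed.

Lemma avg_sample_le ch (F G : sample_t n -> R) :
  (forall s, F s <= G s) -> avg_sample ch F <= avg_sample ch G.
Proof.
elim: ch F G => [|p ch IH] F G hFG //=.
apply: avg_tuple_le => r; exact: IH.
Qed.

Lemma avg_sample_block ch (f : {set 'I_n} * nat -> seq 'I_n -> R) : nonempty ch ->
  avg_sample ch (fun smp => \sum_(pq <- zip ch smp) f pq.1 pq.2)
  = \sum_(p <- ch) avg_tuple p.1 p.2 (f p).
Proof.
elim: ch => [|p ch IH] /=; first by rewrite !big_nil.
move=> /andP[hp hch]; rewrite big_cons.
rewrite (_ : (fun r => avg_sample ch (fun rs => \sum_(pq <- zip (p :: ch) (r :: rs)) f pq.1 pq.2))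
   = fun r => f p r + \sum_(p <- ch) avg_tuple p.1 p.2 (f p)).
  by rewrite avg_tupleD avg_tuple_cst.
apply/funext => r /=.
rewrite (_ : (fun rs => \sum_(pq <- (p, r) :: zip ch rs) f pq.1 pq.2)
   = (fun rs => f p r + \sum_(pq <- zip ch rs) f pq.1 pq.2)).
  by rewrite avg_sampleD avg_sample_cst // IH.
by apply/funext => rs; rewrite big_cons.
Qed.

End Prob.

Section Alg.
Variables (R : realType) (d n : nat).
Variable gphi : 'I_n -> 'rV[R]_d -> 'rV[R]_d.

Lemma valid_nonempty (ch : choice_t n) : valid_choice ch -> nonempty ch.
Proof. by case/andP => /allP h _; apply/allP => p /h /andP[]. Qed.

Lemma valid_pos (ch : choice_t n) p : valid_choice ch -> p \in ch -> (0 < p.2)%N.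
Proof. by case/andP => /allP h _ /h /andP[]. Qed.

Lemma valid_count (ch : choice_t n) x : valid_choice ch ->
  count (fun p : {set 'I_n} * nat => x \in p.1) ch = 1%N.
Proof. by case/andP => _ /forallP /(_ x) /eqP. Qed.

Lemma part_sum (ch : choice_t n) (a : 'I_n -> R) : valid_choice ch ->
  \sum_(p <- ch) \sum_(s in p.1) a s = \sum_s a s.
Proof.
move=> hv.
rewrite (eq_bigr (fun p : {set 'I_n} * nat => \sum_s (if s \in p.1 then a s else 0))); last first.
  by move=> p _; rewrite big_mkcond.
rewrite exchange_big; apply: eq_bigr => s _.
by rewrite -big_mkcond big_const_seq valid_count //= addr0.
Qed.

Lemma unbiased (ch : choice_t n) w v : valid_choice ch ->
  avg_sample ch (fun smp => dotv (stoch_grad gphi ch smp w) v) = dotv (gradP gphi w) v.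
Proof.
move=> hv; pose a := fun s => dotv (gphi s w) v.
rewrite (_ : (fun smp => dotv (stoch_grad gphi ch smp w) v) = fun smp => n%:R^-1 *
    \sum_(pq <- zip ch smp) (#|pq.1.1|%:R / (pq.1.2)%:R * \sum_(s <- pq.2) a s)); last first.
  apply/funext => smp; rewrite /stoch_grad dotvZl dotv_suml; congr (_ * _).
  by apply: eq_bigr => pq _; rewrite dotvZl dotv_suml.
rewrite avg_sampleZ (avg_sample_block (fun p r => #|p.1|%:R / (p.2)%:R * \sum_(s <- r) a s) (valid_nonempty hv)).
rewrite /gradP dotvZl dotv_suml -(part_sum a hv); congr (_ * _).
rewrite !big_seq; apply: eq_bigr => p hp.
have hb := valid_pos hv hp.
have hC : (0 < #|p.1|)%N by move: (valid_nonempty hv) => /allP /(_ p hp).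
rewrite avg_tupleZ avg_tuple_sum //; field.
by rewrite !pnatr_eq0 -!lt0n hb hC.
Qed.

Variable strat : strategy n.
Hypothesis hvs : forall h, valid_choice (strat h).

Lemma EhistD m (F G : seq (sample_t n) -> R) h :
  Ehist strat m (fun h => F h + G h) h = Ehist strat m F h + Ehist strat m G h.
Proof.
elim: m h => [|m IH] h //=.
by rewrite -avg_sampleD; congr avg_sample; apply/funext => s; rewrite IH.
Qed.

Lemma EhistZ m c (F : seq (sample_t n) -> R) h :
  Ehist strat m (fun h => c * F h) h = c * Ehist strat m F h.
Proof.
elim: m h => [|m IH] h //=.
by rewrite -avg_sampleZ; congr avg_sample; apply/funext => s; rewrite IH.
Qed.

Lemma Ehist_cst m (c : R) h : Ehist strat m (fun _ => c) h = c.
Proof.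
elim: m h => [|m IH] h //=.
rewrite (_ : (fun s => Ehist strat m (fun=> c) (rcons h s)) = fun _ => c).
  by rewrite avg_sample_cst // valid_nonempty.
by apply/funext => s; rewrite IH.
Qed.

Lemma Ehist_le m (F G : seq (sample_t n) -> R) h :
  (forall h, F h <= G h) -> Ehist strat m F h <= Ehist strat m G h.
Proof.
elim: m h => [|m IH] h hFG //=.
by apply: avg_sample_le => s; apply: IH.
Qed.

Lemma Ehist_peel m (F : seq (sample_t n) -> R) h :
  Ehist strat m.+1 F h =
  Ehist strat m (fun h' => avg_sample (strat h') (fun s => F (rcons h' s))) h.
Proof.
elim: m h => [|m IH] h; first by [].
transitivity (avg_sample (strat h) (fun s => Ehist strat m.+1 F (rcons h s))); first by [].
transitivity (avg_sample (strat h) (fun s => Ehist strat m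
   (fun h' => avg_sample (strat h') (fun s => F (rcons h' s))) (rcons h s))); last by [].
by congr avg_sample; apply/funext => s; rewrite IH.
Qed.

Lemma traj_aux_rcons eta pre rest s w :
  traj_aux gphi strat eta pre (rcons rest s) w =
  traj_aux gphi strat eta pre rest w - eta *:
    stoch_grad gphi (strat (pre ++ rest)) s (traj_aux gphi strat eta pre rest w).
Proof.
elim: rest pre w => [|r rest IH] pre w /=; first by rewrite cats0.
by rewrite IH cat_rcons.
Qed.

Lemma traj_rcons eta h s :
  traj gphi strat eta (rcons h s) =
  traj gphi strat eta h - eta *: stoch_grad gphi (strat h) s (traj gphi strat eta h).
Proof. by rewrite /traj traj_aux_rcons. Qed.

End Alg.

Theorem theorem2 (R : realType) (d n : nat) (hn : (0 < n)%N)
  (phi : 'I_n -> 'rV[R]_d -> R) (gphi : 'I_n -> 'rV[R]_d -> 'rV[R]_d)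
  (hgrad : forall i, has_gradient (phi i) (gphi i))
  (H gam : R) (hH : 0 < H) (hgam : 0 < gam)
  (hsc : strongly_convex H (Pobj phi) (gradP gphi))
  (hsm : smooth gam (Pobj phi) (gradP gphi))
  (wstar : 'rV[R]_d) (hmin : forall w, Pobj phi wstar <= Pobj phi w)
  (strat : strategy n) (hstrat : forall h, valid_choice (strat h))
  (eta : R) (heta0 : 0 < eta) (heta1 : eta <= 2 / (H + 1 / gam)) :
  let alpha := 1 - (2 * eta * H / gam) / (H + 1 / gam) in
  ((H - 1 / gam) / (H + 1 / gam)) ^+ 2 <= alpha /\ alpha < 1 /\
  forall T : nat, (1 <= T)%N ->
    EP phi gphi strat eta T - Pobj phi wstar <=
      alpha ^+ T / (2 * gam) * sqnorm wstar +
      eta ^+ 2 / (2 * gam) *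
        \sum_(1 <= t < T.+1) alpha ^+ (T - t) * EV gphi strat eta t.
Proof.
move=> alpha.
have hL : 0 < gam^-1 by rewrite invr_gt0.
have hK : 0 < H + gam^-1 by rewrite addr_gt0.
have hK0 : H + gam^-1 != 0 by rewrite lt0r_neq0.
have hg0 : gam != 0 by rewrite lt0r_neq0.
have hHg : H * gam + 1 != 0 by rewrite lt0r_neq0 // addr_gt0 ?mulr_gt0.
pose K := H + gam^-1.
pose c := 2 * H * gam^-1 / K ^+ 2.
have hc : 0 < c by rewrite /c divr_gt0 ?exprn_gt0 // !mulr_gt0.
have ealpha : alpha = 1 - eta * K * c.
  by rewrite /alpha /c /K; field; rewrite hg0 hHg.
have heK : eta * K <= 2.
  by move: (ler_wpM2r (ltW hK) heta1); rewrite div1r mulfVK.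
have hb : ((H - 1 / gam) / (H + 1 / gam)) ^+ 2 = 1 - 2 * c.
  by rewrite /c /K div1r; field; rewrite hg0 hHg.
have hcK : 0 < eta * K * c by apply: mulr_gt0 => //; apply: mulr_gt0.
have ha0 : 0 <= alpha.
  rewrite ealpha; have := sqr_ge0 ((H - 1 / gam) / (H + 1 / gam)); rewrite hb.
  have := ler_wpM2r (ltW hc) heK; lra.
split.
  rewrite hb ealpha; have := ler_wpM2r (ltW hc) heK; lra.
split; first by rewrite ealpha; lra.
move=> T _.
have hgP : gradP gphi wstar = 0 by apply: (grad_min (f := Pobj phi) hgam hsm hmin).
have contr : forall w, sqnorm (w - wstar - eta *: gradP gphi w) <= alpha * sqnorm (w - wstar).
  move=> w.
  have hc1 := cocoP (f := Pobj phi) (gf := gradP gphi) (H := H) hgam hsc hsm wstar w.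
  rewrite hgP subr0 -/K in hc1.
  set X := sqnorm (w - wstar) in hc1 *; set P2 := sqnorm (gradP gphi w) in hc1 *.
  set I := dotv (gradP gphi w) (w - wstar) in hc1.
  rewrite sqnormBZ -/X -/P2 -/I.
  have hP2 := sqnorm_ge0 (gradP gphi w).
  have h1 := ler_wpM2l (ltW heta0) hc1.
  have h2 : 0 <= eta * P2 * (2 - eta * K).
    by apply: mulr_ge0; [apply: mulr_ge0; [exact: ltW | exact: sqnorm_ge0] | rewrite subr_ge0].
  rewrite -(ler_pM2l hK) -/K.
  have -> : K * (alpha * X) = K * X - 2 * eta * H * gam^-1 * X.
    by rewrite ealpha /c /K; field; rewrite hg0 hHg.
  rewrite /K in h1 h2 *; nra.
have hne : forall h, nonempty (strat h) by move=> h; exact: valid_nonempty.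
have step : forall h, avg_sample (strat h)
    (fun s => sqnorm (traj gphi strat eta (rcons h s) - wstar)) <=
    alpha * sqnorm (traj gphi strat eta h - wstar) + eta ^+ 2 * Vcond gphi strat eta h.
  move=> h; set w := traj gphi strat eta h; set ch := strat h; set p := gradP gphi w.
  set y := w - wstar - eta *: p.
  have e : (fun s => sqnorm (traj gphi strat eta (rcons h s) - wstar)) = fun s =>
      (sqnorm y + 2 * eta * dotv p y) + (- 2 * eta) * dotv (stoch_grad gphi ch s w) y
      + eta ^+ 2 * sqnorm (stoch_grad gphi ch s w - p).
    apply/funext => s; rewrite traj_rcons -/w -/ch.
    have -> : w - eta *: stoch_grad gphi ch s w - wstar = y - eta *: (stoch_grad gphi ch s w - p).
      by apply/matrixP => i j; rewrite /y !mxE; ring.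
    by rewrite sqnormBZ dotvBl; ring.
  rewrite e !avg_sampleD !avg_sample_cst //.
  rewrite (avg_sampleZ ch (-2 * eta) (fun s => dotv (stoch_grad gphi ch s w) y)).
  rewrite (avg_sampleZ ch (eta ^+ 2) (fun s => sqnorm (stoch_grad gphi ch s w - p))).
  rewrite unbiased //.
  have := contr w; rewrite -/p -/y /Vcond /= -/w -/ch -/p.
  lra.
  all: first [exact: (hstrat h) | exact: (hne h) | idtac].

pose D m := Ehist strat m (fun h => sqnorm (traj gphi strat eta h - wstar)) [::].
have rec : forall m, D m.+1 <= alpha * D m + eta ^+ 2 * EV gphi strat eta m.+1.
  move=> m; rewrite /D Ehist_peel /EV /=.
  rewrite -!EhistZ -EhistD; apply: Ehist_le => h0; exact: step.
have bound : forall T, D T <= alpha ^+ T * sqnorm wstar +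
    eta ^+ 2 * \sum_(1 <= t < T.+1) alpha ^+ (T - t) * EV gphi strat eta t.
  elim=> [|m IH].
    rewrite big_geq // mulr0 addr0 expr0 mul1r /D /=.
    by rewrite /traj /= sub0r sqnormN.
  apply: le_trans (rec m) _.
  rewrite big_nat_recr //= subnn expr0 mul1r.
  have -> : \sum_(1 <= t < m.+1) alpha ^+ (m.+1 - t) * EV gphi strat eta t
      = alpha * \sum_(1 <= t < m.+1) alpha ^+ (m - t) * EV gphi strat eta t.
    rewrite mulr_sumr; apply: eq_big_nat => t /andP[_ ht].
    by rewrite subSn // exprS mulrA.
  have := ler_wpM2l ha0 IH; rewrite [alpha ^+ m.+1]exprS; lra.
have hEP : EP phi gphi strat eta T <= Pobj phi wstar + 1 / (2 * gam) * D T.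
  rewrite /EP /D -EhistZ -(Ehist_cst hstrat T (Pobj phi wstar) [::]) -EhistD.
  apply: Ehist_le => h; have := hsm (traj gphi strat eta h) wstar.
  by rewrite hgP dotv0l addr0.
have h2g : 0 <= 1 / (2 * gam) by rewrite div1r invr_ge0 mulr_ge0 // ltW.
have := ler_wpM2l h2g (bound T).
have -> : alpha ^+ T / (2 * gam) * sqnorm wstar +
      eta ^+ 2 / (2 * gam) * \sum_(1 <= t < T.+1) alpha ^+ (T - t) * EV gphi strat eta t
    = 1 / (2 * gam) * (alpha ^+ T * sqnorm wstar +
      eta ^+ 2 * \sum_(1 <= t < T.+1) alpha ^+ (T - t) * EV gphi strat eta t).
  by rewrite !div1r; ring.
lra.
Qed.
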